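(* Let $\lambda=(\lambda_1,\dots,\lambda_l)$ be a partition and $0\le k\le l-1$. If $\alpha=(\alpha_1,\alpha_2,\dots)$ (finitely many nonzero entries) satisfies $\mathrm{wt}\,\alpha<N_{\lambda,k}$, then $\partial^\alpha s_\lambda\big(\sum_{i=1}^k[x_i]\big)=0$ (for $k=0$ this means $\partial^\alpha s_\lambda(0)=0$).
   Context: For $t=(t_1,t_2,\dots)$ define $p_m(t)$ by $\exp(\sum_{m\ge1}t_mk^m)=\sum_{m\ge0}p_m(t)k^m$, $p_m=0$ for $m<0$; $s_\lambda(t)=\det(p_{\lambda_i-i+j}(t))_{1\le i,j\le l}$. $[x]=(x,x^2/2,x^3/3,\dots)$. $\partial_i=\partial/\partial t_i$, $\partial^\alpha=\partial_1^{\alpha_1}\partial_2^{\alpha_2}\cdots$, $\mathrm{wt}\,\alpha=\sum_i i\alpha_i$. $N_{\lambda,k}=\lambda_{k+1}+\dots+\lambda_l$. *)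

(* Defs.v *)
From mathcomp Require Import all_boot all_order all_algebra.
From mathcomp Require Import mpoly.
Set Implicit Arguments. Unset Strict Implicit. Unset Printing Implicit Defensive.
Import Order.TTheory GRing.Theory Num.Theory.
Local Open Scope ring_scope.

(* Variables t_1, ..., t_N are the mpoly variables 'X_0, ..., 'X_(N-1):
   'X_i stands for t_(i+1). *)

(* p_m(t) = coefficient of k^m in exp(sum_j t_j k^j)
          = sum over multi-indices beta with sum_j j*beta_j = m
            of prod_j t_j^(beta_j) / beta_j!  (truncated to t_1..t_N). *)
Definition schur_p (R : fieldType) (N m : nat) : {mpoly R[N]} :=
  \sum_(b : 'X_{1..N < m.+1} | mnmwgt (val b) == m)
     (\prod_(i < N) ((val b) i)`!%:R^-1) *: 'X_[val b].

Definition schur_pz (R : fieldType) (N : nat) (m : int) : {mpoly R[N]} :=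
  match m with Posz n => schur_p R N n | Negz _ => 0 end.

Definition schur_s (R : fieldType) (N : nat) (la : seq nat) : {mpoly R[N]} :=
  \det (\matrix_(i < size la, j < size la)
          schur_pz R N ((nth 0%N la i)%:Z - i%:Z + j%:Z)).

(* the point sum_{a=1}^k [x_a] : t_m = sum_a x_a^m / m *)
Definition miwa_pt (R : fieldType) (N k : nat) (x : 'I_k -> R) : 'I_N -> R :=
  fun i => \sum_(a < k) x a ^+ i.+1 / (i.+1)%:R.

Definition is_partition (la : seq nat) : bool :=
  sorted geq la && all (fun a => 0 < a)%N la.

Definition Nlak (la : seq nat) (k : nat) : nat := sumn (drop k la).

(* Main.v *)
Require Import Defs.
From mathcomp Require Import all_boot all_order all_algebra.
From mathcomp Require Import mpoly.
From mathcomp Require Import fingroup perm.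
From mathcomp Require Import ring lra zify.
Set Implicit Arguments. Unset Strict Implicit. Unset Printing Implicit Defensive.
Import Order.TTheory GRing.Theory Num.Theory.
Local Open Scope ring_scope.

Section S.
Variable (R : fieldType) (N : nat).
Hypothesis Rchar0 : [pchar R] =i pred0.

Lemma natn0 n : (n > 0)%N -> (n%:R : R) != 0.
Proof. by move=> h; rewrite (proj1 (pcharf0P R) Rchar0) -lt0n. Qed.

Definition cf (mu : 'X_{1..N}) : R := \prod_(i < N) ((mu i)`!%:R)^-1.

Lemma coef_sp m mu : (schur_p R N m)@_mu = if mnmwgt mu == m then cf mu else 0.
Proof.
rewrite /schur_p raddf_sum /=.
case: eqP => hw.
  have lt : (mdeg mu < m.+1)%N by rewrite ltnS -hw leq_mdeg_mnmwgt.
  rewrite (bigD1 (Sub mu lt)) /=; last by rewrite hw.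
  rewrite [X in _ + X]big1 ?addr0.
    by rewrite mcoeffZ mcoeffX eqxx mulr1.
  move=> b /andP [_ nb]; rewrite mcoeffZ mcoeffX.
  case: eqP => e; last by rewrite mulr0.
  by exfalso; move/eqP: nb; apply; apply/val_inj; rewrite /= e.
rewrite big1 // => b /eqP hb; rewrite mcoeffZ mcoeffX.
by case: eqP => e; [exfalso; apply: hw; rewrite -e hb | rewrite mulr0].
Qed.

Lemma coef_spz z mu : (schur_pz R N z)@_mu = if (mnmwgt mu)%:Z == z then cf mu else 0.
Proof.
case: z => [m|m] /=; first by rewrite coef_sp.
by rewrite mcoeff0.
Qed.

Lemma dspz z (i : 'I_N) : (schur_pz R N z)^`M(i) = schur_pz R N (z - (i.+1)%:Z).
Proof.
apply/mpolyP => mu; rewrite mcoeff_mderiv !coef_spz mnmwgtD mnmwgt1.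
have -> : ((mnmwgt mu + i.+1)%N%:Z == z) = ((mnmwgt mu)%:Z == z - (i.+1)%:Z).
  by apply/eqP/eqP; lia.
case: eqP => _; last by rewrite mul0rn.
rewrite /cf (bigD1 i) //= [in RHS](bigD1 i) //=.
rewrite (eq_bigr (fun j => ((mu j)`!%:R)^-1)); last first.
  by move=> j /negbTE nj; rewrite mnmDE mnm1E eq_sym nj addn0.
rewrite mnmDE mnm1E eqxx addn1 factS natrM invfM -mulrnAl -mulrnAl.
rewrite -mulr_natr mulVf ?mul1r //.
exact: natn0.
Qed.

Lemma euler_X (b : 'X_{1..N}) :
  \sum_(i < N) (i.+1)%:R *: ('X_i * ('X_[b])^`M(i)) = (mnmwgt b)%:R *: ('X_[b] : {mpoly R[N]}).
Proof.
have h i : 'X_i * ('X_[b])^`M(i) = (b i)%:R *: ('X_[b] : {mpoly R[N]}).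
  rewrite mderivX -scalerAr.
  case: (posnP (b i)) => [->|pos]; first by rewrite !scale0r.
  rewrite -mpolyXD addmC submK //; apply/mnm_lepP => j.
  by rewrite mnm1E; case: eqP => [<-|]; [exact: pos | move=> _].
rewrite (eq_bigr (fun i : 'I_N => (i.+1 * b i)%:R *: ('X_[b] : {mpoly R[N]}))); last first.
  by move=> i _; rewrite h scalerA natrM.
by rewrite -scaler_suml -natr_sum /mnmwgt; congr (_%:R *: _); apply: eq_bigr => i _; rewrite mulnC.
Qed.

Lemma euler m :
  \sum_(i < N) (i.+1)%:R *: ('X_i * (schur_p R N m)^`M(i)) = m%:R *: schur_p R N m.
Proof.
rewrite /schur_p.
rewrite (eq_bigr (fun i : 'I_N => \sum_(b : 'X_{1..N < m.+1} | mnmwgt (val b) == m)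
   (\prod_(i0 < N) (val b i0)`!%:R^-1) *: ((i.+1)%:R *: ('X_i * ('X_[val b])^`M(i))))); last first.
  move=> i _; rewrite raddf_sum mulr_sumr scaler_sumr; apply: eq_bigr => b _.
  by rewrite linearZ /= mderivZ -scalerAr.
rewrite exchange_big scaler_sumr; apply: eq_bigr => b /eqP hb.
by rewrite -scaler_sumr euler_X hb !scalerA mulrC.
Qed.

Lemma dprod_seq (I : eqType) (s : seq I) (F : I -> {mpoly R[N]}) i : uniq s ->
  (\prod_(a <- s) F a)^`M(i) =
  \sum_(c <- s) \prod_(a <- s) (if a == c then (F a)^`M(i) else F a).
Proof.
elim: s => [|y s IH] /=; first by rewrite !big_nil mderivC.
case/andP => ny us.
rewrite big_cons mderivM IH // big_cons big_cons eqxx.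
have e1 : \prod_(a <- s) (if a == y then (F a)^`M(i) else F a) = \prod_(a <- s) F a.
  apply: eq_big_seq => a ha.
  by case: eqP => // e; rewrite -e ha in ny.
rewrite e1 mulr_sumr; congr (_ + _).
apply: eq_big_seq => c hc.
rewrite big_cons; case: eqP => // e; by rewrite e hc in ny.
Qed.

Lemma ddet l (A : 'M[{mpoly R[N]}]_l) d :
  (\det A)^`M(d) = \sum_(r < l) \det (\matrix_(a, b) if a == r then (A a b)^`M(d) else A a b).
Proof.
rewrite /determinant raddf_sum /=.
rewrite (eq_bigr (fun s : 'S_l => (-1) ^+ s * \sum_(r < l) \prod_j
   (if j == r then (A j (s j))^`M(d) else A j (s j)))); last first.
  move=> s _ /=; rewrite mderivM.
  have -> : ((-1) ^+ s : {mpoly R[N]})^`M(d) = 0.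
    by case: (odd_perm s); rewrite /= ?expr0 ?expr1 ?mderivN mderivC ?oppr0.
  rewrite mul0r add0r; congr (_ * _).
  by rewrite (dprod_seq _ _ (index_enum_uniq _)).
under eq_bigr => s _ do rewrite mulr_sumr.
rewrite exchange_big; apply: eq_bigr => r _; apply: eq_bigr => s _.
by congr (_ * _); apply: eq_bigr => a _; rewrite mxE.
Qed.

Definition Dm l (r : 'I_l -> int) : {mpoly R[N]} :=
  \det (\matrix_(i < l, j < l) schur_pz R N (r i + j%:Z)).

Lemma Dm_ext l (r1 r2 : 'I_l -> int) : r1 =1 r2 -> Dm r1 = Dm r2.
Proof.
by move=> e; rewrite /Dm; congr (\det _); apply/matrixP => a b; rewrite !mxE e.
Qed.

Lemma dDm l (r : 'I_l -> int) (d : 'I_N) :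
  (Dm r)^`M(d) = \sum_(i0 < l) Dm (fun i => if i == i0 then r i - (d.+1)%:Z else r i).
Proof.
rewrite /Dm ddet; apply: eq_bigr => i0 _; congr (\det _); apply/matrixP => a b.
rewrite !mxE; case: eqP => // _; rewrite dspz; congr schur_pz; ring.
Qed.

Lemma derivL (v : 'I_N -> R) l (alpha : 'X_{1..N}) (r : 'I_l -> int) :
  (forall w : 'I_l -> nat, (\sum_i w i)%N = mnmwgt alpha ->
     (Dm (fun i => r i - (w i)%:Z)).@[v] = 0) ->
  ((Dm r)^`M[alpha]).@[v] = 0.
Proof.
move: {2}(mdeg alpha) (erefl (mdeg alpha)) => n.
elim: n alpha r => [|n IH] alpha r hd H.
  move/eqP: hd; rewrite mdeg_eq0 => /eqP E; subst alpha; rewrite mderivm0m.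
  have := H (fun _ => 0%N); rewrite big1 // mnmwgt0 => /(_ erefl).
  have e : Dm (fun i => r i - (0%N)%:Z) = Dm r by apply: Dm_ext => i; rewrite subr0.
  by rewrite e.
case: (pickP (fun i => 0 < alpha i)%N) => [i hi | h0]; last first.
  exfalso; move: hd; rewrite mdegE big1 // => j _.
  by have := h0 j; rewrite /= lt0n => /negbFE /eqP.
have le : (U_(i) <= alpha)%MM.
  apply/mnm_lepP => j; rewrite mnm1E; case: eqP => [<-|] //.
have -> : alpha = (U_(i) + (alpha - U_(i)))%MM by rewrite addmC submK.
rewrite mderivmDm mderivmU1m dDm linear_sum raddf_sum /=.
apply: big1 => i0 _; apply: IH.
  by move: hd; rewrite -{1}(submK le) mdegD mdeg1 addn1 => -[].
move=> w hw.
have := H (fun j => w j + (j == i0) * i.+1)%N.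
have es : (\sum_(j < l) (j == i0) * i.+1 = i.+1)%N.
  rewrite (bigD1 i0) //= eqxx mul1n big1 ?addn0 // => j /negbTE ->; by rewrite mul0n.
rewrite big_split /= hw es.
rewrite -[X in _ = mnmwgt X -> _](submK le) mnmwgtD mnmwgt1 => /(_ erefl).
rewrite (@Dm_ext _ _ (fun i1 => (if i1 == i0 then r i1 - (i.+1)%:Z else r i1) - (w i1)%:Z)) //.
move=> j; case: eqP => _ /=; rewrite ?mul1n ?mul0n ?addn0; lia.
Qed.

Lemma sum_trunc (F : nat -> R) n0 n : (n0 <= n)%N ->
  (forall s, (n0 <= s)%N -> (s < n)%N -> F s = 0) ->
  \sum_(s < n) F s = \sum_(s < n0) F s.
Proof.
move=> h H; rewrite -!(big_mkord xpredT) (@big_cat_nat _ _ _ n0 0 n _ _ (leq0n n0) h) /=.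
rewrite [X in _ + X]big_nat_cond [X in _ + X]big1 ?addr0 // => s /andP [/andP [a b] _].
exact: H.
Qed.

Variable (k : nat) (x : 'I_k -> R).
Let v := @miwa_pt R N k x.
Definition q (z : int) : R := (schur_pz R N z).@[v].

Lemma q_neg (z : int) : z < 0 -> q z = 0.
Proof. by case: z => // n _; rewrite /q /= meval0. Qed.

Definition pis (n : nat) : R := \sum_(a < k) x a ^+ n.

Lemma qrec (m : nat) :
  m%:R * q m = \sum_(i < N) pis i.+1 * q (m%:Z - (i.+1)%:Z).
Proof.
have := congr1 (meval v) (euler m).
rewrite mevalZ raddf_sum /= => <-.
apply: eq_bigr => i _.
rewrite mevalZ mevalM mevalXU.
have -> : (schur_p R N m)^`M(i) = (schur_pz R N m%:Z)^`M(i) by [].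
rewrite dspz /q mulrA; congr (_ * _).
rewrite /v /miwa_pt /pis mulr_sumr; apply: eq_bigr => a _.
by rewrite mulrCA divff ?mulr1 // natn0.
Qed.

Definition Q : {poly R} := \poly_(m < N.+1) q m%:Z.
Definition Pa (y : R) : {poly R} := \poly_(n < N.+1) (if n == 0%N then 0 else y ^+ n).
Definition Lp (y : R) : {poly R} := 1 - y *: 'X.
Definition eqm (A B : {poly R}) := forall m, (m <= N)%N -> A`_m = B`_m.
Definition th (A : {poly R}) := 'X * A^`().

Lemma coef_th A m : (th A)`_m = A`_m *+ m.
Proof. by rewrite /th coefXM coef_deriv; case: m. Qed.

Lemma thM A B : th (A * B) = th A * B + A * th B.
Proof. rewrite /th derivM; ring. Qed.

Lemma eqmMr A B C : eqm A B -> eqm (A * C) (B * C).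
Proof.
move=> h m hm; rewrite !coefM; apply: eq_bigr => j _; rewrite h //.
exact: leq_trans (leq_ord j) hm.
Qed.

Lemma eqmMl A B C : eqm A B -> eqm (C * A) (C * B).
Proof.
move=> h m hm; rewrite !coefM; apply: eq_bigr => j _; rewrite h //.
exact: leq_trans (leq_subr _ _) hm.
Qed.

Lemma eqmD A B C D : eqm A B -> eqm C D -> eqm (A + C) (B + D).
Proof. by move=> h1 h2 m hm; rewrite !coefD h1 // h2. Qed.

Lemma eqmT A B C : eqm A B -> eqm B C -> eqm A C.
Proof. by move=> h1 h2 m hm; rewrite h1 // h2. Qed.

Lemma eqmE A B : A = B -> eqm A B.
Proof. by move=> ->. Qed.

Lemma thQ : eqm (th Q) ((\sum_(a < k) Pa (x a)) * Q).
Proof.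
move=> m hm; rewrite coef_th coefM coef_poly ltnS hm -mulr_natl qrec.
rewrite [RHS]big_ord_recl /=.
have -> : (\sum_(a < k) Pa (x a))`_0 = 0 by rewrite coef_sum big1 // => a _; rewrite coef_poly.
rewrite mul0r add0r.
rewrite (@sum_trunc (fun i => pis i.+1 * q (m%:Z - (i.+1)%:Z)) m N) //; last first.
  by move=> s h1 h2; rewrite q_neg ?mulr0 //; lia.
apply: eq_bigr => i _; rewrite coef_sum coef_poly /=.
have hi : (i < m)%N by [].
have hb : bump 0 i = i.+1 by rewrite /bump leq0n add1n.
rewrite hb ltnS (leq_trans (leq_subr _ _) hm) /pis; congr (_ * _).
  by apply: eq_bigr => a _; rewrite coef_poly ltnS (leq_trans hi hm).
congr q; lia.
Qed.

Lemma coefLpM y A j : (Lp y * A)`_j = A`_j - y * (if j == 0%N then 0 else A`_j.-1).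
Proof. by rewrite /Lp mulrBl mul1r -scalerAl coefB coefZ coefXM. Qed.

Lemma LpPa y : eqm (Lp y * Pa y) (- th (Lp y)).
Proof.
move=> m hm; rewrite coefLpM coefN coef_th /Lp coefB coef1 coefZ coefX !coef_poly.
case: m hm => [|[|m]] hm /=.
- by rewrite !mulr0 !subr0 mulr0n oppr0.
- by rewrite ltnS hm expr1 mulr0 subr0 mulr1 sub0r mulr1n opprK.
- rewrite !ltnS hm (ltnW hm) !mulr0 subr0. by rewrite mul0rn oppr0 -exprS subrr.
Qed.

Lemma Eseq (s : seq R) :
  (\prod_(y <- s) Lp y)`_0 = 1 /\
  (forall j, (size s < j)%N -> (\prod_(y <- s) Lp y)`_j = 0) /\
  eqm (th (\prod_(y <- s) Lp y)) (- ((\prod_(y <- s) Lp y) * \sum_(y <- s) Pa y)).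
Proof.
elim: s => [|y s [IH0 [IH1 IH2]]].
  rewrite !big_nil; split; first by rewrite coef1. split; first by case => // j _; rewrite coef1.
  by apply: eqmE; rewrite /th derivC mulr0 mulr0 oppr0.
rewrite !big_cons; split; first by rewrite coefLpM IH0 /= mulr0 subr0.
split.
  move=> j hj; rewrite coefLpM IH1; last by apply: ltn_trans hj.
  case: j hj => [|j] //= hj; by rewrite IH1 // mulr0 subr0.
set E := \prod_(y0 <- s) Lp y0; set P := \sum_(y0 <- s) Pa y0.
rewrite thM.
apply: (@eqmT _ ((- (Lp y * Pa y)) * E + Lp y * (- (E * P)))).
  apply: eqmD; [apply: eqmMr | apply: eqmMl]; last exact: IH2.
  by move=> m hm; rewrite coefN LpPa // coefN opprK.
by apply: eqmE; ring.
Qed.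

Definition Ek := \prod_(a < k) Lp (x a).

Lemma Ek_props : Ek`_0 = 1 /\ (forall j, (k < j)%N -> Ek`_j = 0) /\
  eqm (th Ek) (- (Ek * \sum_(a < k) Pa (x a))).
Proof.
have := Eseq (map x (index_enum 'I_k)).
have sz : size (index_enum 'I_k) = k by rewrite -[RHS]card_ord cardT enumT [index_enum _]unlock.
rewrite !big_map size_map sz.
by [].
Qed.

Lemma Grec m : (0 < m)%N -> (m <= N)%N ->
  \sum_(s < m.+1) Ek`_s * q (m%:Z - s%:Z) = 0.
Proof.
move=> h1 h2; case: Ek_props => _ [_ hE].
have hG : eqm (th (Ek * Q)) 0.
  rewrite thM; apply: (@eqmT _ (- (Ek * \sum_(a < k) Pa (x a)) * Q +
     Ek * ((\sum_(a < k) Pa (x a)) * Q))).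
    by apply: eqmD; [apply: eqmMr | apply: eqmMl; apply: thQ].
  by apply: eqmE; ring.
have := hG m h2; rewrite coef_th coef0 => /eqP.
rewrite -mulr_natr mulf_eq0 (negbTE (natn0 h1)) orbF => /eqP hz.
rewrite -[RHS]hz coefM.
apply: eq_bigr => s _; rewrite coef_poly ltnS (leq_trans (leq_subr _ _) h2).
congr (_ * q _); have := leq_ord s; lia.
Qed.

Lemma evalDm l (r : 'I_l -> int) :
  (Dm r).@[v] = \det (\matrix_(i < l, j < l) q (r i + j%:Z)).
Proof.
rewrite /Dm -det_map_mx; congr (\det _); apply/matrixP => a b.
by rewrite !mxE.
Qed.

Lemma det_zero l (r : 'I_l -> int) (j0 : 'I_l) : (k <= j0)%N ->
  (forall i, r i + j0%:Z != 0) -> (forall i, r i + j0%:Z <= N%:Z) ->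
  \det (\matrix_(i < l, j < l) q (r i + j%:Z)) = 0.
Proof.
move=> hk hnz hb; case: Ek_props => E0 [Ebig _].
apply/eqP; rewrite -det_tr; apply/det0P.
exists (\row_(a < l) (if (a <= j0)%N then Ek`_(j0 - a) else 0)).
  apply/negP => /eqP hu; have := congr1 (fun A : 'rV_l => A 0 j0) hu.
  by rewrite !mxE leqnn subnn E0 => /eqP; rewrite oner_eq0.
apply/rowP => i; rewrite !mxE.
under eq_bigr => a _ do rewrite !mxE.
rewrite (@sum_trunc (fun a => (if (a <= j0)%N then Ek`_(j0 - a) else 0) * q (r i + a%:Z)) j0.+1 l) //; last first.
  by move=> s h1 _; rewrite leqNgt h1 mul0r.
rewrite (reindex_inj rev_ord_inj) /=.
rewrite (eq_bigr (fun s : 'I_j0.+1 => Ek`_s * q (r i + j0%:Z - s%:Z))); last first.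
  move=> s _; rewrite subSS leq_subr subKn ?leq_ord //; congr (_ * q _).
  have := leq_ord s; lia.
have := hnz i; have := hb i; case: (r i + j0%:Z) => [mm|mm] hbm hnm.
  have h1 : (0 < mm)%N by case: mm hnm hbm.
  have h2 : (mm <= N)%N by [].
  rewrite -(@sum_trunc (fun s => Ek`_s * q (mm%:Z - s%:Z)) j0.+1 (mm + j0).+1) /=; last 2 first.
  - by rewrite ltnS leq_addl.
  - by move=> s hs _; rewrite Ebig ?mul0r //; apply: leq_trans hs.
  rewrite (@sum_trunc (fun s => Ek`_s * q (mm%:Z - s%:Z)) mm.+1 (mm + j0).+1) /=; last 2 first.
  - by rewrite ltnS leq_addr.
  - by move=> s hs _; rewrite q_neg ?mulr0 //; lia.
  exact: Grec.
apply: big1 => s _; rewrite q_neg ?mulr0 //; lia.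
Qed.
End S.
Lemma PoszSum (I : finType) (P : pred I) (F : I -> nat) :
  ((\sum_(i | P i) F i)%N)%:Z = \sum_(i | P i) (F i)%:Z.
Proof. by elim/big_rec2: _ => // i a b _ <-. Qed.

Lemma sumn_drop (s : seq nat) k :
  sumn (drop k s) = (\sum_(j < size s | (k <= j)%N) nth 0%N s j)%N.
Proof.
rewrite (eq_bigl (fun j : 'I_(size s) => xpredT (nat_of_ord j) && (k <= j)%N)) // -(big_geq_mkord k (size s) xpredT (fun j => nth 0%N s j)) /= -[X in \big[_/_]_(X <= _ < _) _]add0n big_addn.
rewrite sumnE (big_nth 0%N) size_drop /=.
by apply: eq_bigr => i _; rewrite nth_drop addnC.
Qed.

Lemma counting (la : seq nat) k (w : 'I_(size la) -> nat) :
  sorted geq la -> (k < size la)%N ->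
  (forall j0 : 'I_(size la), (k <= j0)%N ->
     exists i : 'I_(size la), (nth 0%N la i)%:Z - i%:Z - (w i)%:Z + j0%:Z = 0) ->
  (Nlak la k <= \sum_i w i)%N.
Proof.
move=> hs hk H.
set l := size la.
pose f (i : 'I_l) : int := (nth 0%N la i)%:Z - i%:Z.
have tr : transitive geq by move=> a b c h1 h2; exact: leq_trans h2 h1.
have rf : reflexive geq by move=> a; exact: leqnn.
have mono : forall i j : 'I_l, (i <= j)%N -> f j <= f i.
  move=> i j hij; have := sorted_leq_nth tr rf 0%N hs i j (ltn_ord i) (ltn_ord j) hij.
  rewrite /f /=; lia.
pose g (j : 'I_l) := odflt j [pick i | f i - (w i)%:Z + j%:Z == 0].
have gP : forall j : 'I_l, (k <= j)%N -> f (g j) - (w (g j))%:Z + j%:Z = 0.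
  move=> j hj; rewrite /g; case: pickP => [i /eqP //| h].
  by exfalso; case: (H j hj) => i hi; have := h i; rewrite /f hi eqxx.
pose B := [set j : 'I_l | (k <= j)%N].
pose A := g @: B.
have ginj : {in B &, injective g}.
  move=> j1 j2; rewrite !inE => h1 h2 e.
  have H1 := gP j1 h1; have H2 := gP j2 h2; rewrite e in H1.
  apply/val_inj => /=; lia.
have e1 : \sum_(i in A) (w i)%:Z <= \sum_i (w i)%:Z.
  rewrite [X in _ <= X](bigID (mem A)) /= lerDl; exact: sumr_ge0.
have e2 : \sum_(i in A) (w i)%:Z = \sum_(i in A) f i + \sum_(j in B) (j : nat)%:Z.
  rewrite (big_imset (fun i => (w i)%:Z) ginj) /= (big_imset f ginj) /= -big_split /=.
  apply: eq_bigr => j; rewrite inE => hj; have := gP j hj; lia.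
have e3 : (Nlak la k)%:Z = \sum_(i in B) f i + \sum_(j in B) (j : nat)%:Z.
  rewrite /Nlak sumn_drop PoszSum -big_split /=.
  rewrite [RHS](eq_bigl (fun j : 'I_l => (k <= j)%N)); last by move=> j; rewrite inE.
  by apply: eq_bigr => j _; rewrite /f subrK.
pose c := f (Ordinal hk).
have hc : forall X : {set 'I_l}, \sum_(i in X) f i = \sum_(i in X) (f i - c) + c *+ #|X|.
  by move=> X; rewrite [in RHS]sumrB [in RHS]sumr_const subrK.
have cAB : #|A| = #|B| by apply: card_in_imset.
have e4 : \sum_(i in B) f i <= \sum_(i in A) f i.
  rewrite !hc cAB lerD2r (big_setID (A:=A) B) (big_setID (A:=B) A) setIC /=.
  apply: lerD => //; apply: (@le_trans _ _ 0).
    rewrite -oppr_ge0 -sumrN; apply: sumr_ge0 => i /setDP [hb _].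
    rewrite inE in hb; have := mono (Ordinal hk) i hb; rewrite /c; lia.
  apply: sumr_ge0 => i /setDP [_ hb].
  rewrite inE -ltnNge in hb; have := mono i (Ordinal hk) (ltnW hb); rewrite /c; lia.
have ew : ((\sum_i w i)%N)%:Z = \sum_i (w i)%:Z by exact: PoszSum.
rewrite -lez_nat e3 ew; apply: le_trans e1; rewrite e2 lerD2r; exact: e4.
Qed.

Theorem proposition2p3 (R : fieldType) (Rchar0 : [pchar R] =i pred0)
  (la : seq nat) (k : nat) (N : nat) (alpha : 'X_{1..N}) :
  is_partition la ->
  (k < size la)%N ->
  (size la + nth 0%N la 0 <= N)%N ->
  (mnmwgt alpha < Nlak la k)%N ->
  forall x : 'I_k -> R,
    ((schur_s R N la)^`M[alpha]).@[@miwa_pt R N k x] = 0.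
Proof.
move=> hpart hk hN hw x.
have hs : sorted geq la by case/andP: hpart.
have -> : schur_s R N la = @Dm R N (size la) (fun i => (nth 0%N la i)%:Z - (i : nat)%:Z) by [].
apply: (derivL Rchar0) => w hwt.
rewrite evalDm.
pose r := fun i : 'I_(size la) => (nth 0%N la i)%:Z - (i : nat)%:Z - (w i)%:Z.
case: (boolP [exists j0 : 'I_(size la), (k <= j0)%N && [forall i, r i + (j0 : nat)%:Z != 0]]).
  case/existsP => j0 /andP [hj0 /forallP hnz].
  apply: (@det_zero R N Rchar0 k x (size la) r j0 hj0) => // i.
  have tr : transitive geq by move=> a b c h1 h2; exact: leq_trans h2 h1.
  have rf : reflexive geq by move=> a; exact: leqnn.
  have h0 : (0 < size la)%N by apply: leq_ltn_trans hk.
  have := sorted_leq_nth tr rf 0%N hs 0%N i h0 (ltn_ord i) (leq0n _).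
  have := ltn_ord j0; rewrite /r /=; lia.
move/existsPn => hn; exfalso.
have : (Nlak la k <= \sum_i w i)%N.
  apply: counting => // j0 hj0.
  have := hn j0; rewrite hj0 /= => /forallPn [i /negPn /eqP hi].
  by exists i.
by rewrite hwt leqNgt hw.
Qed.
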